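(* Let $\mathbb{T}$ be a time scale, $a<b$ in $\mathbb{T}$, and let $d,f$ be continuous functions on $[a,b]_{\mathbb{T}}$ such that $1+\mu(t)d(t)\neq 0$ for all $t\in[a,b]_{\mathbb{T}}$ and $$\sup_{t\in[a,b]_{\mathbb{T}}}|e_d(t,a)|\int_a^t|e_d(a,\sigma(s))|\,\Delta s<\infty.$$ Then the first-order dynamic equation $$x^{\Delta}(t)-d(t)x(t)-f(t)=0,\quad t\in[a,b]_{\mathbb{T}},$$ has Hyers–Ulam stability: for every $\varepsilon>0$, whenever $g\in C^1_{rd}([a,b]_{\mathbb{T}})$ satisfies $|g^{\Delta}(t)-d(t)g(t)-f(t)|\le\varepsilon$ for all $t\in[a,b]_{\mathbb{T}}$, there exists a solution $w\in C^1_{rd}([a,b]_{\mathbb{T}})$ of $w^\Delta-dw-f=0$ on $[a,b]_{\mathbb{T}}$ such that $|g(t)-w(t)|\le L\varepsilon$ for all $t\in[a,b]_{\mathbb{T}}$, for some constant $L>0$.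
   Context: A time scale $\mathbb{T}$ is a nonempty closed subset of $\mathbb{R}$; $[a,b]_{\mathbb{T}}:=[a,b]\cap\mathbb{T}$. $\sigma(t)=\inf\{s\in\mathbb{T}:s>t\}$ is the forward jump operator, $\mu(t)=\sigma(t)-t$ the graininess, $f^\Delta$ the delta derivative, and $\int\cdots\Delta s$ the delta integral. $C^1_{rd}([a,b]_{\mathbb{T}})$ denotes delta differentiable functions with rd-continuous delta derivative. For a regressive rd-continuous function $d$ (i.e. $1+\mu d\neq0$), $e_d(t,s)$ denotes the time-scale exponential function, the unique solution of $x^\Delta=d(t)x$, $x(s)=1$. *)

(* Defs.v *)
From Stdlib Require Import Reals Lra ClassicalEpsilon.
Open Scope R_scope.

Definition time_scale (T : R -> Prop) : Prop :=
  (exists x, T x) /\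
  (forall x, (forall eps, 0 < eps -> exists y, T y /\ Rabs (y - x) < eps) -> T x).

Definition in_ts (T : R -> Prop) (a b t : R) : Prop := T t /\ a <= t <= b.

(** s = inf {u in T | u > t}, with inf of the empty set := t
    (for t in T this is the convention inf emptyset = sup T = t). *)
Definition is_sigma (T : R -> Prop) (t s : R) : Prop :=
  ((exists u, T u /\ t < u) /\
     (forall u, T u -> t < u -> s <= u) /\
     (forall s', (forall u, T u -> t < u -> s' <= u) -> s' <= s))
  \/ ((forall u, T u -> u <= t) /\ s = t).

Definition fjump (T : R -> Prop) (t : R) : R :=
  epsilon (inhabits 0) (is_sigma T t).

Definition mu (T : R -> Prop) (t : R) : R := fjump T t - t.

Definition delta_deriv (T : R -> Prop) (f : R -> R) (fd : R) (t : R) : Prop :=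
  forall eps, 0 < eps -> exists delta, 0 < delta /\
    forall s, T s -> Rabs (t - s) < delta ->
      Rabs (f (fjump T t) - f s - fd * (fjump T t - s))
        <= eps * Rabs (fjump T t - s).

Definition cont_on (T : R -> Prop) (a b : R) (h : R -> R) : Prop :=
  forall t, in_ts T a b t -> forall eps, 0 < eps -> exists delta, 0 < delta /\
    forall s, in_ts T a b s -> Rabs (s - t) < delta -> Rabs (h s - h t) < eps.

Definition left_dense (T : R -> Prop) (t : R) : Prop :=
  forall eps, 0 < eps -> exists s, T s /\ t - eps < s < t.

Definition rd_cont (T : R -> Prop) (a b : R) (h : R -> R) : Prop :=
  forall t, in_ts T a b t ->
    (fjump T t = t ->
       forall eps, 0 < eps -> exists delta, 0 < delta /\
         forall s, in_ts T a b s -> Rabs (s - t) < delta -> Rabs (h s - h t) < eps) /\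
    (left_dense T t ->
       exists l, forall eps, 0 < eps -> exists delta, 0 < delta /\
         forall s, in_ts T a b s -> t - delta < s < t -> Rabs (h s - l) < eps).

Definition C1rd (T : R -> Prop) (a b : R) (g gd : R -> R) : Prop :=
  (forall t, in_ts T a b t -> delta_deriv T g (gd t) t) /\ rd_cont T a b gd.

Definition is_exp (T : R -> Prop) (a b : R) (d : R -> R) (e : R -> R -> R) : Prop :=
  forall s, in_ts T a b s ->
    e s s = 1 /\
    forall t, in_ts T a b t -> delta_deriv T (fun u => e u s) (d t * e t s) t.

(** F is a delta antiderivative of h on [a,b)_T, so that
    int_a^t h(s) Delta s = F t - F a (Cauchy delta integral). *)
Definition delta_antideriv (T : R -> Prop) (a b : R) (h F : R -> R) : Prop :=
  forall s, T s -> a <= s < b -> delta_deriv T F (h s) s.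

(* Main.v *)
Require Import Defs.
From Stdlib Require Import Reals Lra ClassicalEpsilon Classical.
From Coquelicot Require Import Coquelicot.
Open Scope R_scope.

Definition rdense (T : R -> Prop) (t : R) : Prop :=
  forall eps, 0 < eps -> exists u, T u /\ t < u < t + eps.

Lemma sig_unique T t s1 s2 : is_sigma T t s1 -> is_sigma T t s2 -> s1 = s2.
Proof.
  intros [[[u [Hu1 Hu2]] [H1 H1']]|[H1 H1']] [[[v [Hv1 Hv2]] [H2 H2']]|[H2 H2']].
  - apply Rle_antisym; [apply H2'|apply H1']; assumption.
  - specialize (H2 u Hu1); lra.
  - specialize (H1 v Hv1); lra.
  - lra.
Qed.

Lemma sig_exists T t : exists s, is_sigma T t s.
Proof.
  destruct (classic (exists u, T u /\ t < u)) as [[u [Hu Htu]]|Hn].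
  - set (E := fun y => forall v, T v -> t < v -> y <= v).
    assert (Hb : bound E). { exists u. intros y Hy. apply Hy; auto. }
    assert (Hne : exists y, E y). { exists t. intros v _ Hv; lra. }
    destruct (completeness E Hb Hne) as [m [Hm1 Hm2]].
    exists m. left. split; [exists u; auto|split].
    + intros v Hv Htv. apply Hm2. intros y Hy. apply Hy; auto.
    + intros s' Hs'. apply Hm1. exact Hs'.
  - exists t. right. split; auto. intros u Hu. destruct (Rle_lt_dec u t); auto.
    exfalso; apply Hn; exists u; split; auto.
Qed.

Lemma fjump_spec T t : is_sigma T t (fjump T t).
Proof. unfold fjump. apply epsilon_spec. apply sig_exists. Qed.

Lemma fjump_ge T t : t <= fjump T t.
Proof.
  destruct (fjump_spec T t) as [[[u [Hu Htu]] [H1 H1']]|[H1 H1']].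
  - apply H1'. intros v _ Hv; lra.
  - lra.
Qed.

Lemma fjump_le T t u : T u -> t < u -> fjump T t <= u.
Proof.
  intros Hu Htu.
  destruct (fjump_spec T t) as [[_ [H1 H1']]|[H1 H1']].
  - apply H1; auto.
  - specialize (H1 u Hu); lra.
Qed.

Lemma fjump_in T t : time_scale T -> T t -> T (fjump T t).
Proof.
  intros [_ Hcl] Ht.
  destruct (fjump_spec T t) as [[[u [Hu Htu]] [H1 H1']]|[H1 H1']].
  - apply Hcl. intros eps Heps.
    destruct (classic (exists v, T v /\ t < v /\ v < fjump T t + eps)) as [[v [Hv [Hv1 Hv2]]]|Hn].
    + exists v. split; auto. specialize (H1 v Hv Hv1). rewrite Rabs_right; lra.
    + exfalso. assert (fjump T t + eps <= fjump T t); [|lra].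
      apply H1'. intros v Hv Htv. destruct (Rle_lt_dec (fjump T t + eps) v); auto.
      exfalso; apply Hn; exists v; auto.
  - rewrite H1'; auto.
Qed.

Lemma fjump_char T t u : T u -> t < u -> (forall v, T v -> t < v -> u <= v) -> fjump T t = u.
Proof.
  intros Hu Htu Hmin. apply (sig_unique T t). apply fjump_spec.
  left. split; [exists u; auto|]. split; [exact Hmin|].
  intros s' Hs'. apply Hs'; auto.
Qed.

Lemma fjump_rdense T t : rdense T t -> fjump T t = t.
Proof.
  intros Hrd. apply Rle_antisym; [|apply fjump_ge].
  apply Rnot_lt_le; intro H.
  destruct (Hrd (fjump T t - t)) as [u [Hu Hu2]]; [lra|].
  assert (fjump T t <= u) by (apply fjump_le; auto; lra). lra.
Qed.

Lemma fjump_gap T t v : T v -> t < v -> v < fjump T t -> False.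
Proof. intros Hv H1 H2. assert (fjump T t <= v) by (apply fjump_le; auto). lra. Qed.

Lemma lub_in T (E : R -> Prop) m : time_scale T -> (forall x, E x -> T x) -> (exists x, E x) -> is_lub E m -> T m.
Proof.
  intros [_ Hcl] HET [x0 Hx0] [Hm1 Hm2]. apply Hcl. intros eps Heps.
  destruct (classic (exists v, E v /\ m - eps < v)) as [[v [Hv1 Hv2]]|Hn].
  - exists v. split; auto. specialize (Hm1 v Hv1). rewrite Rabs_left1; lra.
  - exfalso. assert (m <= m - eps); [|lra]. apply Hm2. intros v Hv.
    destruct (Rle_lt_dec v (m - eps)); auto. exfalso; apply Hn; exists v; auto.
Qed.

Lemma ts_ind T c t (S : R -> Prop) : time_scale T -> T c -> c <= t -> S c ->
  (forall tau, T tau -> c <= tau < t -> S tau -> rdense T tau ->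
     exists delta, 0 < delta /\ forall u, T u -> tau < u < tau + delta -> S u) ->
  (forall tau, T tau -> c < tau <= t -> (forall u, T u -> c <= u < tau -> S u) -> S tau) ->
  forall tau, T tau -> c <= tau <= t -> S tau.
Proof.
  intros HT Hc Hct H0 Hrd Hld tau0 Htau0 Hr0.
  apply NNPP; intro Hn0.
  set (A := fun u => T u /\ c <= u <= t /\ ~ S u).
  set (L := fun y => forall u, A u -> y <= u).
  assert (Hb : bound L). { exists tau0. intros y Hy. apply Hy. split; auto. }
  assert (Hne : exists y, L y). { exists c. intros u [_ [Hu _]]; lra. }
  destruct (completeness L Hb Hne) as [m [Hm1 Hm2]].
  assert (Hlow : forall u, A u -> m <= u). { intros u Hu. apply Hm2. intros y Hy; apply Hy; auto. }
  assert (Happ : forall eps, 0 < eps -> exists u, A u /\ u < m + eps).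
  { intros eps Heps. apply NNPP; intro Hn.
    assert (L (m + eps)). { intros u Hu. destruct (Rle_lt_dec (m+eps) u); auto.
      exfalso; apply Hn; exists u; auto. }
    specialize (Hm1 _ H). lra. }
  assert (Hcm : c <= m). { apply Hm1. intros u [_ [Hu _]]; lra. }
  assert (Hmt : m <= tau0). { apply Hlow. split; auto. }
  assert (HmT : T m).
  { destruct HT as [_ Hcl]. apply Hcl. intros eps Heps.
    destruct (Happ eps Heps) as [u [Hu1 Hu2]]. exists u. split; [apply Hu1|].
    specialize (Hlow u Hu1). rewrite Rabs_right; lra. }
  assert (Hbelow : forall u, T u -> c <= u < m -> S u).
  { intros u Hu Hu2. apply NNPP; intro Hn. assert (A u) by (split; auto; split; [lra|auto]).
    specialize (Hlow u H). lra. }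
  assert (HSm : S m).
  { destruct (Rle_lt_or_eq_dec c m Hcm) as [Hlt|Heq].
    - apply Hld; auto. lra.
    - subst m. auto. }
  assert (Hrdm : rdense T m /\ m < t).
  { destruct (Happ 1 Rlt_0_1) as [u0 [Hu0 _]].
    assert (Hnm : forall u, A u -> m < u).
    { intros u Hu. destruct (Rle_lt_or_eq_dec m u (Hlow u Hu)) as [?|<-]; auto.
      exfalso. destruct Hu as [_ [_ Hu]]; auto. }
    split.
    - intros eps Heps. destruct (Happ eps Heps) as [u [Hu1 Hu2]]. exists u.
      split; [apply Hu1|]. specialize (Hnm u Hu1). lra.
    - specialize (Hnm u0 Hu0). destruct Hu0 as [_ [[_ ?] _]]. lra. }
  destruct Hrdm as [Hrdm Hmt'].
  destruct (Hrd m HmT (conj Hcm Hmt') HSm Hrdm) as [delta [Hd Hd2]].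
  destruct (Happ delta Hd) as [u [Hu1 Hu2]].
  assert (m <> u). { intro; subst. destruct Hu1 as [_ [_ ?]]; auto. }
  pose proof (Hlow u Hu1).
  destruct Hu1 as [HuT [_ HnS]]. apply HnS. apply Hd2; auto. lra.
Qed.
Lemma abs_le_iff x y : Rabs x <= y <-> -y <= x <= y.
Proof. unfold Rabs; destruct (Rcase_abs x); split; intros; lra. Qed.

Lemma le_eps_lemma A B : (forall eps, 0 < eps -> A <= B + eps) -> A <= B.
Proof.
  intros H. destruct (Rle_lt_dec A B); auto.
  specialize (H ((A - B)/2)). lra.
Qed.

Lemma abs0 x : Rabs x <= 0 -> x = 0.
Proof. intros H. destruct (Req_dec x 0); auto. pose proof (Rabs_pos_lt x H0); lra. Qed.

Definition Psup (T : R -> Prop) (a y : R) : R :=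
  epsilon (inhabits 0) (is_lub (fun s => T s /\ a <= s <= y)).

Lemma Psup_spec T a y : time_scale T -> T a -> a <= y ->
  T (Psup T a y) /\ a <= Psup T a y <= y /\
  (forall u, T u -> a <= u <= y -> u <= Psup T a y).
Proof.
  intros HT Ha Hay.
  assert (Hl : is_lub (fun s => T s /\ a <= s <= y) (Psup T a y)).
  { unfold Psup. apply epsilon_spec.
    destruct (completeness (fun s => T s /\ a <= s <= y)) as [m Hm].
    - exists y. intros s [_ Hs]; lra.
    - exists a; split; auto; lra.
    - exists m; auto. }
  destruct Hl as [H1 H2]. split; [|split; [split|]].
  - apply (lub_in T (fun s => T s /\ a <= s <= y)); auto.
    + intros x [Hx _]; auto.
    + exists a; split; auto; lra.
    + split; auto.
  - apply H1. split; auto; lra.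
  - apply H2. intros s [_ Hs]; lra.
  - intros u Hu Hu2. apply H1; auto.
Qed.

Lemma dichotomy T c t : time_scale T -> T c -> T t -> c < t ->
  left_dense T t \/ exists r, T r /\ c <= r < t /\ fjump T r = t.
Proof.
  intros HT Hc Ht Hct. destruct (classic (left_dense T t)) as [H|H]; [left; auto|right].
  unfold left_dense in H. apply not_all_ex_not in H. destruct H as [eps H].
  apply imply_to_and in H. destruct H as [Heps H].
  set (y := Rmax c (t - eps/2)).
  assert (Hy : c <= y < t) by (unfold y; unfold Rmax; destruct Rle_dec; lra).
  destruct (Psup_spec T c y HT Hc (proj1 Hy)) as [Hr1 [Hr2 Hr3]].
  exists (Psup T c y). split; auto. split; [lra|].
  apply fjump_char; auto; [lra|].
  intros v Hv Hrv. destruct (Rle_lt_dec t v); auto. exfalso.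
  destruct (Rle_lt_dec v y).
  - specialize (Hr3 v Hv (conj (Rle_trans _ _ _ (proj1 Hr2) (Rlt_le _ _ Hrv)) r0)). lra.
  - apply H. exists v. split; auto. unfold y in r0. unfold Rmax in r0; destruct Rle_dec; lra.
Qed.

Definition ctsT (T : R -> Prop) (f : R -> R) (t : R) : Prop :=
  forall eps, 0 < eps -> exists delta, 0 < delta /\
    forall s, T s -> Rabs (s - t) < delta -> Rabs (f s - f t) < eps.

Lemma dd_step T f fd t : T t -> delta_deriv T f fd t ->
  f (fjump T t) - f t = fd * (fjump T t - t).
Proof.
  intros Ht Hd. pose proof (fjump_ge T t) as Hge.
  apply Rminus_diag_uniq. apply abs0.
  apply le_eps_lemma. intros eps Heps.
  destruct (Hd (eps / (fjump T t - t + 1))) as [delta [Hdel H]].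
  { apply Rdiv_lt_0_compat; lra. }
  specialize (H t Ht). rewrite Rminus_diag, Rabs_R0 in H. specialize (H Hdel).
  replace (f (fjump T t) - f t - fd * (fjump T t - t)) with
    (f (fjump T t) - f t - fd * (fjump T t - t)) by ring.
  eapply Rle_trans; [apply H|]. rewrite (Rabs_right (fjump T t - t)) by lra.
  unfold Rdiv. rewrite Rplus_0_l.
  assert (eps * / (fjump T t - t + 1) * (fjump T t - t) <= eps); [|lra].
  apply (Rmult_le_reg_r (fjump T t - t + 1)); [lra|].
  field_simplify; [|lra]. nra.
Qed.

Lemma dd_cont T f fd t : T t -> delta_deriv T f fd t -> ctsT T f t.
Proof.
  intros Ht Hd eps Heps. pose proof (dd_step T f fd t Ht Hd) as Hst.
  set (m := fjump T t - t). assert (Hm : 0 <= m) by (pose proof (fjump_ge T t); unfold m; lra).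
  destruct (Hd (eps / (2 * (m + 1)))) as [d0 [Hd0 H]].
  { apply Rdiv_lt_0_compat; lra. }
  exists (Rmin d0 (Rmin 1 (eps / (2 * (Rabs fd + 1))))).
  assert (Hfd : 0 < eps / (2 * (Rabs fd + 1))) by (apply Rdiv_lt_0_compat; pose proof (Rabs_pos fd); lra).
  split; [apply Rmin_glb_lt; [lra|apply Rmin_glb_lt; lra]|].
  intros s Hs Hst2.
  assert (H1 : Rabs (s - t) < d0) by (eapply Rlt_le_trans; [apply Hst2|apply Rmin_l]).
  assert (H2 : Rabs (s - t) < 1) by (eapply Rlt_le_trans; [apply Hst2|]; eapply Rle_trans; [apply Rmin_r|apply Rmin_l]).
  assert (H3 : Rabs (s - t) < eps / (2 * (Rabs fd + 1))) by (eapply Rlt_le_trans; [apply Hst2|]; eapply Rle_trans; [apply Rmin_r|apply Rmin_r]).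
  specialize (H s Hs). rewrite <- Rabs_Ropp in H. replace (- (t - s)) with (s - t) in H by ring.
  specialize (H H1).
  assert (Hb : Rabs (fjump T t - s) <= m + 1).
  { replace (fjump T t - s) with (m - (s - t)) by (unfold m; ring).
    eapply Rle_trans; [apply Rabs_triang|]. rewrite Rabs_Ropp, (Rabs_right m) by lra. lra. }
  assert (Hx : eps / (2 * (m + 1)) * Rabs (fjump T t - s) <= eps / 2).
  { replace (eps / 2) with (eps / (2 * (m + 1)) * (m + 1)) by (field; lra).
    apply Rmult_le_compat_l; auto. left; apply Rdiv_lt_0_compat; lra. }
  assert (Hy : Rabs fd * Rabs (s - t) < eps / 2).
  { destruct (Req_dec (Rabs fd) 0) as [E|E]. rewrite E; lra.
    apply Rlt_le_trans with (Rabs fd * (eps / (2 * (Rabs fd + 1)))).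
    apply Rmult_lt_compat_l; auto. pose proof (Rabs_pos fd); lra.
    apply (Rmult_le_reg_r (2 * (Rabs fd + 1))). pose proof (Rabs_pos fd); lra.
    field_simplify; [|pose proof (Rabs_pos fd); lra]. pose proof (Rabs_pos fd); nra. }
  replace (f s - f t) with (- (f (fjump T t) - f s - fd * (fjump T t - s)) + fd * (s - t))
    by (unfold m in Hst; assert (E: f (fjump T t) = f t + fd * (fjump T t - t)) by lra;
        rewrite E; ring).
  eapply Rle_lt_trans; [apply Rabs_triang|]. rewrite Rabs_Ropp, Rabs_mult. lra.
Qed.
Lemma compare T c t U V u v : time_scale T -> T c -> T t -> c <= t ->
  (forall s, T s -> c <= s < t ->
     delta_deriv T U (u s) s /\ delta_deriv T V (v s) s /\ Rabs (u s) <= v s) ->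
  (left_dense T t -> ctsT T U t /\ ctsT T V t) ->
  Rabs (U t - U c) <= V t - V c.
Proof.
  intros HT Hc Ht Hct Hder Hcont.
  assert (Key : forall eta, 0 < eta -> forall tau, T tau -> c <= tau <= t ->
    Rabs (U tau - U c) <= V tau - V c + eta * (tau - c)).
  { intros eta Heta. apply ts_ind; auto.
    - rewrite Rminus_diag, Rabs_R0. lra.
    - intros tau Htau Hr HS Hrd.
      destruct (Hder tau Htau Hr) as [HdU [HdV Huv]].
      pose proof (fjump_rdense T tau Hrd) as Hf.
      destruct (HdU (eta/2)) as [d1 [Hd1 H1]]; [lra|].
      destruct (HdV (eta/2)) as [d2 [Hd2 H2]]; [lra|].
      exists (Rmin d1 d2). split; [apply Rmin_glb_lt; auto|].
      intros w Hw Hw2. rewrite Hf in H1, H2.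
      assert (Hdist : Rabs (tau - w) < d1 /\ Rabs (tau - w) < d2).
      { pose proof (Rmin_l d1 d2); pose proof (Rmin_r d1 d2).
        rewrite Rabs_left by lra. split; lra. }
      specialize (H1 w Hw (proj1 Hdist)). specialize (H2 w Hw (proj2 Hdist)).
      rewrite (Rabs_left (tau - w)) in H1, H2 by lra.
      apply abs_le_iff in H1. apply abs_le_iff in H2. apply abs_le_iff in HS.
      apply abs_le_iff in Huv. apply abs_le_iff.
      assert (P1 : u tau * (w - tau) <= v tau * (w - tau)) by (apply Rmult_le_compat_r; lra).
      assert (P2 : - u tau * (w - tau) <= v tau * (w - tau)) by (apply Rmult_le_compat_r; lra).
      assert (E1 : u tau * (tau - w) = - (u tau * (w - tau))) by ring.
      assert (E2 : v tau * (tau - w) = - (v tau * (w - tau))) by ring.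
      assert (E3 : eta / 2 * - (tau - w) = eta/2 * (w - tau)) by ring.
      assert (E4 : eta * (w - c) = eta * (tau - c) + eta * (w - tau)) by ring.
      assert (E5 : - (u tau * (w - tau)) = (- u tau) * (w - tau)) by ring.
      rewrite E1, E2, E3 in *. rewrite E4. lra.
    - intros tau Htau Hr Hbel.
      destruct (dichotomy T c tau HT Hc Htau (proj1 Hr)) as [Hld|[r [Hr1 [Hr2 Hr3]]]].
      + assert (Hct2 : ctsT T U tau /\ ctsT T V tau).
        { destruct (Rle_lt_or_eq_dec tau t (proj2 Hr)) as [Hlt|Heq].
          - destruct (Hder tau Htau (conj (Rlt_le _ _ (proj1 Hr)) Hlt)) as [HdU [HdV _]].
            split; eapply dd_cont; eauto.
          - subst; auto. }
        destruct Hct2 as [HcU HcV].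
        apply le_eps_lemma. intros eps Heps.
        destruct (HcU (eps/2)) as [d1 [Hd1 H1]]; [lra|].
        destruct (HcV (eps/2)) as [d2 [Hd2 H2]]; [lra|].
        destruct (Hld (Rmin (Rmin d1 d2) (tau - c))) as [w [Hw Hw2]].
        { repeat apply Rmin_glb_lt; lra. }
        assert (Hwm : Rmin (Rmin d1 d2) (tau - c) <= d1 /\ Rmin (Rmin d1 d2) (tau - c) <= d2
                      /\ Rmin (Rmin d1 d2) (tau - c) <= tau - c).
        { split; [|split]. eapply Rle_trans; [apply Rmin_l|apply Rmin_l].
          eapply Rle_trans; [apply Rmin_l|apply Rmin_r]. apply Rmin_r. }
        assert (Hwd : Rabs (w - tau) < d1 /\ Rabs (w - tau) < d2).
        { rewrite Rabs_left by lra. lra. }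
        specialize (H1 w Hw (proj1 Hwd)). specialize (H2 w Hw (proj2 Hwd)).
        specialize (Hbel w Hw ltac:(lra)).
        apply Rlt_le in H1. apply abs_le_iff in H1.
        apply abs_le_iff. apply abs_le_iff in Hbel.
        apply Rlt_le in H2. apply abs_le_iff in H2.
        assert (eta * (w - c) <= eta * (tau - c)) by (apply Rmult_le_compat_l; lra).
        lra.
      + specialize (Hbel r Hr1 ltac:(lra)).
        destruct (Hder r Hr1 ltac:(lra)) as [HdU [HdV Huv]].
        pose proof (dd_step T U (u r) r Hr1 HdU) as S1.
        pose proof (dd_step T V (v r) r Hr1 HdV) as S2.
        rewrite Hr3 in S1, S2.
        apply abs_le_iff in Hbel. apply abs_le_iff in Huv. apply abs_le_iff.
        assert (P1 : u r * (tau - r) <= v r * (tau - r)) by (apply Rmult_le_compat_r; lra).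
        assert (P2 : - u r * (tau - r) <= v r * (tau - r)) by (apply Rmult_le_compat_r; lra).
        assert (E5 : - u r * (tau - r) = - (u r * (tau - r))) by ring.
        assert (eta * (r - c) <= eta * (tau - c)) by (apply Rmult_le_compat_l; lra).
        lra. }
  apply le_eps_lemma. intros eps Heps.
  specialize (Key (eps / (t - c + 1))). 
  assert (0 < eps / (t - c + 1)) by (apply Rdiv_lt_0_compat; lra).
  specialize (Key H t Ht (conj Hct (Rle_refl t))).
  assert (eps / (t - c + 1) * (t - c) <= eps).
  { apply (Rmult_le_reg_r (t - c + 1)); [lra|]. field_simplify; [|lra]. nra. }
  lra.
Qed.

Lemma bounded_on T c t x : time_scale T -> T c -> T t -> c <= t -> cont_on T c t x ->
  exists M, forall u, T u -> c <= u <= t -> Rabs (x u) <= M.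
Proof.
  intros HT Hc Ht Hct Hx.
  assert (H : forall tau, T tau -> c <= tau <= t ->
    exists M, forall u, T u -> c <= u <= tau -> Rabs (x u) <= M).
  { apply ts_ind; auto.
    - exists (Rabs (x c)). intros u _ Hu. replace u with c by lra. lra.
    - intros tau Htau Hr [M HM] Hrd.
      destruct (Hx tau (conj Htau (conj (proj1 Hr) (Rlt_le _ _ (proj2 Hr)))) 1 Rlt_0_1) as [d [Hd Hd2]].
      exists (Rmin d (t - tau)). split; [apply Rmin_glb_lt; lra|].
      intros w Hw Hw2. exists (Rmax M (Rabs (x tau) + 1)). intros u Hu Hu2.
      destruct (Rle_lt_dec u tau).
      + eapply Rle_trans; [apply HM; auto; lra|apply Rmax_l].
      + assert (Hm : Rmin d (t - tau) <= d /\ Rmin d (t - tau) <= t - tau) by (split; [apply Rmin_l|apply Rmin_r]).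
        assert (Hut : c <= u <= t) by lra.
        specialize (Hd2 u (conj Hu Hut)).
        rewrite Rabs_right in Hd2 by lra. specialize (Hd2 ltac:(lra)).
        eapply Rle_trans; [|apply Rmax_r].
        pose proof (Rabs_triang_inv (x u) (x tau)). lra.
    - intros tau Htau Hr Hbel.
      destruct (dichotomy T c tau HT Hc Htau (proj1 Hr)) as [Hld|[r [Hr1 [Hr2 Hr3]]]].
      + destruct (Hx tau (conj Htau (conj (Rlt_le _ _ (proj1 Hr)) (proj2 Hr))) 1 Rlt_0_1) as [d [Hd Hd2]].
        destruct (Hld (Rmin d (tau - c))) as [w [Hw Hw2]]; [apply Rmin_glb_lt; lra|].
        assert (Hm : Rmin d (tau - c) <= d /\ Rmin d (tau - c) <= tau - c) by (split; [apply Rmin_l|apply Rmin_r]).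
        destruct (Hbel w Hw ltac:(lra)) as [M HM].
        exists (Rmax M (Rabs (x tau) + 1)). intros u Hu Hu2.
        destruct (Rle_lt_dec u w).
        * eapply Rle_trans; [apply HM; auto; lra|apply Rmax_l].
        * eapply Rle_trans; [|apply Rmax_r].
          assert (Hut : c <= u <= t) by lra.
          specialize (Hd2 u (conj Hu Hut)).
          rewrite Rabs_left1 in Hd2 by lra. specialize (Hd2 ltac:(lra)).
          pose proof (Rabs_triang_inv (x u) (x tau)). lra.
      + destruct (Hbel r Hr1 ltac:(lra)) as [M HM].
        exists (Rmax M (Rabs (x tau))). intros u Hu Hu2.
        destruct (Rle_lt_dec u r).
        * eapply Rle_trans; [apply HM; auto; lra|apply Rmax_l].
        * destruct (Rle_lt_or_eq_dec u tau (proj2 Hu2)) as [Hlt|Heq].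
          -- exfalso. apply (fjump_gap T r u); auto. lra.
          -- subst; apply Rmax_r. }
  apply (H t); auto. lra.
Qed.
Lemma dd_lin T f g fd gd al be t : delta_deriv T f fd t -> delta_deriv T g gd t ->
  delta_deriv T (fun u => al * f u + be * g u) (al * fd + be * gd) t.
Proof.
  intros Hf Hg eps Heps.
  set (K := Rabs al + Rabs be + 1).
  assert (HK : 0 < K) by (unfold K; pose proof (Rabs_pos al); pose proof (Rabs_pos be); lra).
  destruct (Hf (eps / K)) as [d1 [Hd1 H1]]; [apply Rdiv_lt_0_compat; lra|].
  destruct (Hg (eps / K)) as [d2 [Hd2 H2]]; [apply Rdiv_lt_0_compat; lra|].
  exists (Rmin d1 d2). split; [apply Rmin_glb_lt; auto|].
  intros s Hs Hst. pose proof (Rmin_l d1 d2); pose proof (Rmin_r d1 d2).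
  specialize (H1 s Hs ltac:(lra)). specialize (H2 s Hs ltac:(lra)).
  replace (al * f (fjump T t) + be * g (fjump T t) - (al * f s + be * g s) -
     (al * fd + be * gd) * (fjump T t - s)) with
    (al * (f (fjump T t) - f s - fd * (fjump T t - s)) + be * (g (fjump T t) - g s - gd * (fjump T t - s))) by ring.
  eapply Rle_trans; [apply Rabs_triang|]. rewrite !Rabs_mult.
  assert (A1 : Rabs al * Rabs (f (fjump T t) - f s - fd * (fjump T t - s)) <= Rabs al * (eps / K * Rabs (fjump T t - s)))
    by (apply Rmult_le_compat_l; auto; apply Rabs_pos).
  assert (A2 : Rabs be * Rabs (g (fjump T t) - g s - gd * (fjump T t - s)) <= Rabs be * (eps / K * Rabs (fjump T t - s)))
    by (apply Rmult_le_compat_l; auto; apply Rabs_pos).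
  assert (A3 : (Rabs al + Rabs be) * (eps / K * Rabs (fjump T t - s)) <= eps * Rabs (fjump T t - s)).
  { replace (eps * Rabs (fjump T t - s)) with (K * (eps / K * Rabs (fjump T t - s))) by (field; lra).
    apply Rmult_le_compat_r. apply Rmult_le_pos; [left; apply Rdiv_lt_0_compat; lra|apply Rabs_pos].
    unfold K; lra. }
  lra.
Qed.

Lemma dd_linear T k t : delta_deriv T (fun y => k * y) k t.
Proof.
  intros eps Heps. exists 1. split; [lra|]. intros s _ _.
  replace (k * fjump T t - k * s - k * (fjump T t - s)) with 0 by ring.
  rewrite Rabs_R0. apply Rmult_le_pos; [lra|apply Rabs_pos].
Qed.

Lemma dd_const T k t : delta_deriv T (fun _ => k) 0 t.
Proof.
  intros eps Heps. exists 1. split; [lra|]. intros s _ _.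
  replace (k - k - 0 * (fjump T t - s)) with 0 by ring.
  rewrite Rabs_R0. apply Rmult_le_pos; [lra|apply Rabs_pos].
Qed.

Lemma dd_ext T f g fd t : (forall u, f u = g u) -> delta_deriv T f fd t -> delta_deriv T g fd t.
Proof. intros H Hd eps Heps. destruct (Hd eps Heps) as [d [Hd1 Hd2]]. exists d. split; auto.
  intros s Hs Hst. rewrite <- !H. auto. Qed.

Lemma dd_val T f fd gd t : fd = gd -> delta_deriv T f fd t -> delta_deriv T f gd t.
Proof. intros ->; auto. Qed.

Lemma local_zero T a b d x D tau : time_scale T -> T a -> T tau -> a < tau <= b ->
  (forall u, in_ts T a b u -> Rabs (d u) <= D) ->
  (forall u, in_ts T a b u -> delta_deriv T x (d u * x u) u) ->
  left_dense T tau -> x tau = 0 ->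
  exists w, T w /\ a <= w < tau /\ x w = 0.
Proof.
  intros HT Ha Htau Hr HD Hx Hld Hx0.
  assert (Hia : in_ts T a b a) by (split; auto; lra).
  assert (HD0 : 0 <= D) by (specialize (HD a Hia); pose proof (Rabs_pos (d a)); lra).
  set (del := / (2 * (D + 1))).
  assert (Hdel : 0 < del) by (unfold del; apply Rinv_0_lt_compat; lra).
  destruct (Hld (Rmin del (tau - a))) as [s0 [Hs0 Hs0r]]; [apply Rmin_glb_lt; lra|].
  pose proof (Rmin_l del (tau - a)); pose proof (Rmin_r del (tau - a)).
  exists s0. split; auto. split; [lra|].
  assert (Hcont : cont_on T s0 tau x).
  { intros u [Hu Hu2] eps Heps.
    assert (Hab : in_ts T a b u) by (split; auto; lra).
    destruct (dd_cont T x _ u Hu (Hx u Hab) eps Heps) as [dd [Hdd Hdd2]].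
    exists dd; split; auto. intros s [Hs _] Hss. apply Hdd2; auto. }
  destruct (bounded_on T s0 tau x HT Hs0 Htau ltac:(lra) Hcont) as [M HM].
  set (E := fun y => exists u, T u /\ s0 <= u <= tau /\ y = Rabs (x u)).
  destruct (completeness E) as [m [Hm1 Hm2]].
  { exists M. intros y [u [Hu [Hu2 ->]]]. apply HM; auto. }
  { exists (Rabs (x s0)). exists s0. split; auto. split; [lra|auto]. }
  assert (Hum : forall u, T u -> s0 <= u <= tau -> Rabs (x u) <= m).
  { intros u Hu Hu2. apply Hm1. exists u; auto. }
  assert (Hm0 : 0 <= m) by (pose proof (Hum s0 Hs0 ltac:(lra)); pose proof (Rabs_pos (x s0)); lra).
  assert (Hhalf : forall u, T u -> s0 <= u <= tau -> Rabs (x u) <= m / 2).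
  { intros u Hu Hu2.
    assert (Hc : Rabs (x tau - x u) <= (D * m) * tau - (D * m) * u).
    { apply (compare T u tau x (fun y => (D * m) * y) (fun s => d s * x s) (fun _ => D * m)); auto; try lra.
      - intros s Hs Hs2. split; [apply Hx; split; auto; lra|]. split; [apply dd_linear|].
        rewrite Rabs_mult. apply Rmult_le_compat; try apply Rabs_pos.
        apply HD; split; auto; lra. apply Hum; auto; lra.
      - intros _. split; [apply (dd_cont T x (d tau * x tau)); auto; apply Hx; split; auto; lra|].
        apply (dd_cont T _ (D * m)); auto. apply dd_linear. }
    rewrite Hx0 in Hc. rewrite Rminus_0_l, Rabs_Ropp in Hc.
    assert (D * m * tau - D * m * u <= m / 2); [|lra].
    replace (D * m * tau - D * m * u) with ((D * m) * (tau - u)) by ring.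
    assert (tau - u <= del) by lra.
    apply Rle_trans with ((D * m) * del). apply Rmult_le_compat_l; [apply Rmult_le_pos|]; lra.
    unfold del. apply (Rmult_le_reg_r (2 * (D + 1))); [lra|]. field_simplify; [|lra]. nra. }
  assert (m <= m / 2). { apply Hm2. intros y [u [Hu [Hu2 ->]]]. apply Hhalf; auto. }
  pose proof (Hum s0 Hs0 ltac:(lra)). apply abs0. lra.
Qed.

Lemma nonvanish T a b d x : time_scale T -> T a -> T b -> a <= b ->
  cont_on T a b d ->
  (forall t, in_ts T a b t -> 1 + mu T t * d t <> 0) ->
  (forall u, in_ts T a b u -> delta_deriv T x (d u * x u) u) ->
  x a <> 0 -> forall t, in_ts T a b t -> x t <> 0.
Proof.
  intros HT Ha Hb Hab Hd Hreg Hx Hxa.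
  destruct (bounded_on T a b d HT Ha Hb Hab Hd) as [D HD].
  intros t [Ht Ht2]. revert t Ht Ht2.
  apply (ts_ind T a b (fun t => x t <> 0)); auto.
  - intros tau Htau Hr Hne Hrd.
    destruct (dd_cont T x _ tau Htau (Hx tau ltac:(split; auto; lra)) (Rabs (x tau))) as [dd [Hdd Hdd2]].
    { apply Rabs_pos_lt; auto. }
    exists dd. split; auto. intros u Hu Hu2. intro Hz.
    specialize (Hdd2 u Hu). rewrite Hz, Rminus_0_l, Rabs_Ropp in Hdd2.
    rewrite Rabs_right in Hdd2 by lra. specialize (Hdd2 ltac:(lra)). lra.
  - intros tau Htau Hr Hbel.
    destruct (dichotomy T a tau HT Ha Htau (proj1 Hr)) as [Hld|[r [Hr1 [Hr2 Hr3]]]].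
    + intro Hz. destruct (local_zero T a b d x D tau HT Ha Htau Hr (fun u Hu => HD u (proj1 Hu) (proj2 Hu)) Hx Hld Hz)
        as [w [Hw [Hw2 Hw3]]].
      apply (Hbel w Hw Hw2 Hw3).
    + assert (Hin : in_ts T a b r) by (split; auto; lra).
      pose proof (dd_step T x _ r Hr1 (Hx r Hin)) as Hs. rewrite Hr3 in Hs.
      specialize (Hreg r Hin). unfold mu in Hreg. rewrite Hr3 in Hreg.
      specialize (Hbel r Hr1 ltac:(lra)).
      replace (x tau) with ((1 + (tau - r) * d r) * x r) by (rewrite <- Rplus_0_r; rewrite <- (Rminus_diag (x r)) at 1; lra).
      apply Rmult_integral_contrapositive; auto.
Qed.
Lemma exp_inv T a b d e : time_scale T -> T a -> T b -> a <= b ->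
  cont_on T a b d -> (forall t, in_ts T a b t -> 1 + mu T t * d t <> 0) ->
  is_exp T a b d e -> forall r, in_ts T a b r -> e a r * e r a = 1.
Proof.
  intros HT Ha Hb Hab Hd Hreg He r Hr.
  assert (Hia : in_ts T a b a) by (split; auto; lra).
  destruct (He a Hia) as [Haa Hda]. destruct (He r Hr) as [Hrr Hdr].
  set (y := fun u => e r a * e u r + (-1) * e u a).
  assert (Hy : forall u, in_ts T a b u -> delta_deriv T y (d u * y u) u).
  { intros u Hu. apply (dd_val T y (e r a * (d u * e u r) + (-1) * (d u * e u a))).
    unfold y; ring. apply dd_lin; auto. }
  destruct (Req_dec (y a) 0) as [H0|H0].
  - unfold y in H0. rewrite Haa in H0. lra.
  - exfalso. apply (nonvanish T a b d y HT Ha Hb Hab Hd Hreg Hy H0 r Hr).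
    unfold y. rewrite Hrr. ring.
Qed.

Lemma dd_prod T f g fd gd t : T t -> delta_deriv T f fd t -> delta_deriv T g gd t ->
  delta_deriv T (fun u => f u * g u) (fd * g t + f (fjump T t) * gd) t.
Proof.
  intros Ht Hf Hg eps Heps.
  set (A := Rabs (f (fjump T t))). set (G := Rabs (g t)).
  assert (HA : 0 <= A) by apply Rabs_pos. assert (HG : 0 <= G) by apply Rabs_pos.
  destruct (Hg (eps / (3 * (A + 1)))) as [d1 [Hd1 H1]]; [apply Rdiv_lt_0_compat; lra|].
  destruct (Hf (eps / (3 * (G + 2)))) as [d2 [Hd2 H2]]; [apply Rdiv_lt_0_compat; lra|].
  destruct (dd_cont T g gd t Ht Hg (Rmin 1 (eps / (3 * (Rabs fd + 1))))) as [d3 [Hd3 H3]].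
  { apply Rmin_glb_lt; [lra|apply Rdiv_lt_0_compat; pose proof (Rabs_pos fd); lra]. }
  exists (Rmin d1 (Rmin d2 d3)). split; [repeat apply Rmin_glb_lt; auto|].
  intros s Hs Hst.
  pose proof (Rmin_l d1 (Rmin d2 d3)); pose proof (Rmin_r d1 (Rmin d2 d3));
  pose proof (Rmin_l d2 d3); pose proof (Rmin_r d2 d3).
  specialize (H1 s Hs ltac:(lra)). specialize (H2 s Hs ltac:(lra)).
  rewrite <- Rabs_Ropp in Hst. replace (- (t - s)) with (s - t) in Hst by ring.
  specialize (H3 s Hs ltac:(lra)).
  pose proof (Rmin_l 1 (eps / (3 * (Rabs fd + 1)))); pose proof (Rmin_r 1 (eps / (3 * (Rabs fd + 1)))).
  set (sg := fjump T t) in *. set (D := Rabs (sg - s)). assert (HD : 0 <= D) by apply Rabs_pos.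
  replace (f sg * g sg - f s * g s - (fd * g t + f sg * gd) * (sg - s)) with
    (f sg * (g sg - g s - gd * (sg - s)) + g s * (f sg - f s - fd * (sg - s)) + fd * (g s - g t) * (sg - s)) by ring.
  eapply Rle_trans; [apply Rabs_triang|]. eapply Rle_trans; [apply Rplus_le_compat_r; apply Rabs_triang|].
  rewrite !Rabs_mult. fold A. fold D.
  assert (B1 : A * Rabs (g sg - g s - gd * (sg - s)) <= eps / 3 * D).
  { apply Rle_trans with (A * (eps / (3 * (A + 1)) * D)). apply Rmult_le_compat_l; auto.
    replace (eps / 3 * D) with ((A + 1) * (eps / (3 * (A + 1)) * D)) by (field; lra).
    apply Rmult_le_compat_r; [apply Rmult_le_pos; [left; apply Rdiv_lt_0_compat; lra|auto]|lra]. }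
  assert (HgS : Rabs (g s) <= G + 1).
  { pose proof (Rabs_triang_inv (g s) (g t)). fold G in H8. lra. }
  assert (B2 : Rabs (g s) * Rabs (f sg - f s - fd * (sg - s)) <= eps / 3 * D).
  { apply Rle_trans with ((G + 2) * (eps / (3 * (G + 2)) * D)).
    apply Rmult_le_compat; auto; try apply Rabs_pos; lra.
    right; field; lra. }
  assert (B3 : Rabs fd * Rabs (g s - g t) * D <= eps / 3 * D).
  { apply Rmult_le_compat_r; auto.
    destruct (Req_dec (Rabs fd) 0) as [Z|Z]. rewrite Z; lra.
    apply Rle_trans with (Rabs fd * (eps / (3 * (Rabs fd + 1)))).
    apply Rmult_le_compat_l; [apply Rabs_pos|lra].
    apply (Rmult_le_reg_r (3 * (Rabs fd + 1))); [pose proof (Rabs_pos fd); lra|].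
    field_simplify; [|pose proof (Rabs_pos fd); lra]. pose proof (Rabs_pos fd); nra. }
  lra.
Qed.
Lemma dd_inv T E Ed t : T t -> delta_deriv T E Ed t -> E t <> 0 -> E (fjump T t) <> 0 ->
  delta_deriv T (fun u => / E u) (- Ed / (E t * E (fjump T t))) t.
Proof.
  intros Ht HE Hn Hns eps Heps.
  set (sg := fjump T t) in *.
  set (c := Rabs (E sg) * Rabs (E t) / 2).
  assert (Hc : 0 < c) by (unfold c; pose proof (Rabs_pos_lt _ Hn); pose proof (Rabs_pos_lt _ Hns); nra).
  assert (HEt : 0 < Rabs (E t)) by (apply Rabs_pos_lt; auto).
  set (eta := Rmin (Rabs (E t) / 2) (eps * Rabs (E t) * c / (2 * (Rabs Ed + 1)))).
  assert (Heta : 0 < eta).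
  { unfold eta. apply Rmin_glb_lt. lra. apply Rdiv_lt_0_compat; [|pose proof (Rabs_pos Ed); lra].
    apply Rmult_lt_0_compat; [apply Rmult_lt_0_compat|]; auto. }
  destruct (HE (eps * c / 2)) as [d1 [Hd1 H1]]; [apply Rdiv_lt_0_compat; [apply Rmult_lt_0_compat|]; lra|].
  destruct (dd_cont T E Ed t Ht HE eta Heta) as [d2 [Hd2 H2]].
  exists (Rmin d1 d2). split; [apply Rmin_glb_lt; auto|].
  intros s Hs Hst. pose proof (Rmin_l d1 d2); pose proof (Rmin_r d1 d2).
  specialize (H1 s Hs ltac:(lra)).
  rewrite <- Rabs_Ropp in Hst. replace (- (t - s)) with (s - t) in Hst by ring.
  specialize (H2 s Hs ltac:(lra)).
  pose proof (Rmin_l (Rabs (E t) / 2) (eps * Rabs (E t) * c / (2 * (Rabs Ed + 1)))) as Hm1.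
  pose proof (Rmin_r (Rabs (E t) / 2) (eps * Rabs (E t) * c / (2 * (Rabs Ed + 1)))) as Hm2.
  fold eta in Hm1, Hm2.
  assert (HEs : Rabs (E t) / 2 <= Rabs (E s)).
  { pose proof (Rabs_triang_inv (E t) (E s)). rewrite <- Rabs_Ropp in H2.
    replace (- (E s - E t)) with (E t - E s) in H2 by ring. lra. }
  assert (Hns' : E s <> 0) by (intro Z; rewrite Z, Rabs_R0 in HEs; lra).
  set (X := E sg - E s - Ed * (sg - s)) in *.
  set (D := Rabs (sg - s)). assert (HD : 0 <= D) by apply Rabs_pos.
  replace (/ E sg - / E s - - Ed / (E t * E sg) * (sg - s)) with
    (- X * / (E sg * E s) + Ed * (sg - s) * (E s - E t) * / (E t * E s * E sg))
    by (unfold X; field; auto).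
  assert (Hlow : c <= Rabs (E sg) * Rabs (E s)).
  { unfold c. pose proof (Rabs_pos (E sg)).
    replace (Rabs (E sg) * Rabs (E t) / 2) with (Rabs (E sg) * (Rabs (E t) / 2)) by field.
    apply Rmult_le_compat_l; auto. }
  eapply Rle_trans; [apply Rabs_triang|].
  rewrite !Rabs_mult, Rabs_Ropp, !Rabs_inv, !Rabs_mult.
  assert (B1 : Rabs X * / (Rabs (E sg) * Rabs (E s)) <= eps / 2 * D).
  { apply Rle_trans with (Rabs X * / c).
    apply Rmult_le_compat_l; [apply Rabs_pos|]. apply Rinv_le_contravar; auto.
    apply (Rmult_le_reg_r c); auto. rewrite Rmult_assoc, Rinv_l by lra. rewrite Rmult_1_r.
    eapply Rle_trans; [apply H1|]. unfold D, sg. right; field. }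
  assert (B2 : Rabs Ed * D * Rabs (E s - E t) * / (Rabs (E t) * Rabs (E s) * Rabs (E sg)) <= eps / 2 * D).
  { apply Rle_trans with (Rabs Ed * D * eta * / (Rabs (E t) * c)).
    apply Rmult_le_compat.
    - apply Rmult_le_pos; [apply Rmult_le_pos|]; auto; apply Rabs_pos.
    - left; apply Rinv_0_lt_compat. pose proof (Rabs_pos_lt _ Hns'); pose proof (Rabs_pos_lt _ Hns).
      apply Rmult_lt_0_compat; [apply Rmult_lt_0_compat|]; auto.
    - apply Rmult_le_compat_l; [apply Rmult_le_pos; auto; apply Rabs_pos|lra].
    - apply Rinv_le_contravar; [apply Rmult_lt_0_compat; auto|].
      replace (Rabs (E t) * Rabs (E s) * Rabs (E sg)) with (Rabs (E t) * (Rabs (E sg) * Rabs (E s))) by ring.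
      apply Rmult_le_compat_l; lra.
    - apply Rle_trans with (Rabs Ed * D * (eps * Rabs (E t) * c / (2 * (Rabs Ed + 1))) * / (Rabs (E t) * c)).
      apply Rmult_le_compat_r; [left; apply Rinv_0_lt_compat; apply Rmult_lt_0_compat; auto|].
      apply Rmult_le_compat_l; [apply Rmult_le_pos; auto; apply Rabs_pos|auto].
      replace (Rabs Ed * D * (eps * Rabs (E t) * c / (2 * (Rabs Ed + 1))) * / (Rabs (E t) * c))
        with ((Rabs Ed / (Rabs Ed + 1)) * (eps / 2 * D)) by (field; pose proof (Rabs_pos Ed); lra).
      assert (Rabs Ed / (Rabs Ed + 1) <= 1).
      { apply (Rmult_le_reg_r (Rabs Ed + 1)); [pose proof (Rabs_pos Ed); lra|].
        field_simplify; [|pose proof (Rabs_pos Ed); lra]. lra. }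
      assert (0 <= eps / 2 * D) by (apply Rmult_le_pos; lra).
      nra. }
  fold D. lra.
Qed.
Definition Pt T a b x := if Rlt_dec x b then Psup T a (Rmax a x) else b.
Definition kf T (A B : R -> R) t := A t * B (fjump T t).
Definition Kf T a b A B x := kf T A B (Pt T a b x).


Lemma Pt_spec T a b x : time_scale T -> T a -> T b -> a < b ->
  T (Pt T a b x) /\ a <= Pt T a b x <= b.
Proof.
  intros HT Ha Hb Hab. unfold Pt. destruct (Rlt_dec x b).
  - assert (a <= Rmax a x) by apply Rmax_l.
    destruct (Psup_spec T a (Rmax a x) HT Ha H) as [H1 [H2 _]]. split; auto.
    assert (Rmax a x < b) by (apply Rmax_lub_lt; lra). split; lra.
  - split; auto; lra.
Qed.

Lemma Pt_low T a b x : time_scale T -> T a -> T b -> a < b -> x <= a -> Pt T a b x = a.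
Proof.
  intros HT Ha Hb Hab Hx. unfold Pt. destruct (Rlt_dec x b); [|lra].
  rewrite Rmax_left by lra.
  destruct (Psup_spec T a a HT Ha (Rle_refl a)) as [_ [H2 _]]. lra.
Qed.

Lemma Pt_high T a b x : b <= x -> Pt T a b x = b.
Proof. intros H. unfold Pt. destruct (Rlt_dec x b); lra. Qed.

Lemma Pt_mid T a b x : time_scale T -> T a -> a <= x < b ->
  T (Pt T a b x) /\ a <= Pt T a b x <= x /\ (forall u, T u -> a <= u <= x -> u <= Pt T a b x).
Proof.
  intros HT Ha Hx. unfold Pt. destruct (Rlt_dec x b); [|lra].
  rewrite Rmax_right by lra. apply Psup_spec; auto; lra.
Qed.

Lemma Pt_fix T a b t : time_scale T -> T a -> T b -> a < b -> T t -> a <= t <= b -> Pt T a b t = t.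
Proof.
  intros HT Ha Hb Hab Ht Ht2. destruct (Rlt_dec t b).
  - destruct (Pt_mid T a b t HT Ha (conj (proj1 Ht2) r)) as [_ [H2 H3]].
    specialize (H3 t Ht (conj (proj1 Ht2) (Rle_refl t))). lra.
  - rewrite Pt_high; lra.
Qed.

Lemma Pt_const T a b y1 y2 : time_scale T -> T a -> a <= y1 <= y2 -> y2 < b ->
  (forall u, T u -> y1 < u <= y2 -> False) -> Pt T a b y1 = Pt T a b y2.
Proof.
  intros HT Ha Hy Hy2 Hno.
  destruct (Pt_mid T a b y1 HT Ha ltac:(lra)) as [A1 [A2 A3]].
  destruct (Pt_mid T a b y2 HT Ha ltac:(lra)) as [B1 [B2 B3]].
  apply Rle_antisym.
  - apply B3; auto; lra.
  - apply A3; auto. split; [lra|]. destruct (Rle_lt_dec (Pt T a b y2) y1); auto.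
    exfalso; apply (Hno _ B1); lra.
Qed.

Lemma Pt_between T a b s t x : time_scale T -> T a -> T s -> T t -> a <= s -> s < t -> t <= b ->
  s < x < t -> s <= Pt T a b x <= x /\ Pt T a b x <= fjump T (Pt T a b x) <= t.
Proof.
  intros HT Ha Hs Ht Has Hst Htb Hx.
  destruct (Pt_mid T a b x HT Ha ltac:(lra)) as [H1 [H2 H3]].
  assert (s <= Pt T a b x) by (apply H3; auto; lra).
  split; [lra|]. split; [apply fjump_ge|]. apply fjump_le; auto; lra.
Qed.

Lemma prod_close p q p0 q0 e : Rabs (p - p0) <= e -> Rabs (q - q0) <= e -> e <= 1 ->
  Rabs (p * q - p0 * q0) <= e * (Rabs p0 + Rabs q0 + 1).
Proof.
  intros H1 H2 He.
  replace (p * q - p0 * q0) with ((p - p0) * q + p0 * (q - q0)) by ring.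
  eapply Rle_trans; [apply Rabs_triang|]. rewrite !Rabs_mult.
  assert (Hq : Rabs q <= Rabs q0 + 1).
  { pose proof (Rabs_triang_inv q q0). lra. }
  assert (Rabs (p - p0) * Rabs q <= e * (Rabs q0 + 1)) by (apply Rmult_le_compat; auto; apply Rabs_pos).
  assert (Rabs p0 * Rabs (q - q0) <= Rabs p0 * e) by (apply Rmult_le_compat_l; auto; apply Rabs_pos).
  lra.
Qed.

Lemma AB_cont T a b A B t : cont_on T a b A -> cont_on T a b B -> in_ts T a b t ->
  forall eps, 0 < eps -> exists delta, 0 < delta /\ forall p q, in_ts T a b p -> in_ts T a b q ->
    Rabs (p - t) < delta -> Rabs (q - t) < delta -> Rabs (A p * B q - A t * B t) <= eps.
Proof.
  intros HA HB Ht eps Heps.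
  set (e := Rmin 1 (eps / (Rabs (A t) + Rabs (B t) + 1))).
  assert (He : 0 < e) by (unfold e; apply Rmin_glb_lt; [lra|apply Rdiv_lt_0_compat;
     [lra|pose proof (Rabs_pos (A t)); pose proof (Rabs_pos (B t)); lra]]).
  destruct (HA t Ht e He) as [d1 [Hd1 H1]]. destruct (HB t Ht e He) as [d2 [Hd2 H2]].
  exists (Rmin d1 d2). split; [apply Rmin_glb_lt; auto|].
  intros p q Hp Hq Hpt Hqt. pose proof (Rmin_l d1 d2); pose proof (Rmin_r d1 d2).
  specialize (H1 p Hp ltac:(lra)). specialize (H2 q Hq ltac:(lra)).
  eapply Rle_trans; [apply prod_close; [left; apply H1|left; apply H2|apply Rmin_l]|].
  unfold e. apply Rle_trans with (eps / (Rabs (A t) + Rabs (B t) + 1) * (Rabs (A t) + Rabs (B t) + 1)).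
  apply Rmult_le_compat_r; [pose proof (Rabs_pos (A t)); pose proof (Rabs_pos (B t)); lra|apply Rmin_r].
  right; field. pose proof (Rabs_pos (A t)); pose proof (Rabs_pos (B t)); lra.
Qed.
Lemma reg_right T a b A B x0 : time_scale T -> T a -> T b -> a < b ->
  cont_on T a b A -> cont_on T a b B -> a <= x0 < b ->
  forall eps, 0 < eps -> exists delta, 0 < delta /\ exists c,
    forall x, x0 < x < x0 + delta -> Rabs (Kf T a b A B x - c) <= eps.
Proof.
  intros HT Ha Hb Hab HA HB Hx0 eps Heps.
  destruct (classic (exists eta, 0 < eta /\ forall u, T u -> x0 < u < x0 + eta -> False)) as [[eta [Heta Hno]]|Hn].
  - exists (Rmin eta (b - x0)). split; [apply Rmin_glb_lt; lra|].
    exists (Kf T a b A B x0). intros x Hx. pose proof (Rmin_l eta (b - x0)); pose proof (Rmin_r eta (b - x0)).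
    unfold Kf. rewrite (Pt_const T a b x0 x); auto; try lra.
    + rewrite Rminus_diag, Rabs_R0; lra.
    + intros u Hu Hu2. apply (Hno u Hu). lra.
  - assert (Hrd : forall eta, 0 < eta -> exists u, T u /\ x0 < u < x0 + eta).
    { intros eta Heta. apply NNPP; intro Hc. apply Hn. exists eta. split; auto.
      intros u Hu Hu2. apply Hc. exists u; auto. }
    assert (Hx0T : T x0).
    { destruct HT as [_ Hcl]. apply Hcl. intros e He. destruct (Hrd e He) as [u [Hu Hu2]].
      exists u. split; auto. rewrite Rabs_right; lra. }
    assert (Hin0 : in_ts T a b x0) by (split; auto; lra).
    destruct (AB_cont T a b A B x0 HA HB Hin0 eps Heps) as [d1 [Hd1 H1]].
    destruct (Hrd (Rmin d1 (b - x0))) as [u [Hu Hu2]]; [apply Rmin_glb_lt; lra|].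
    pose proof (Rmin_l d1 (b - x0)); pose proof (Rmin_r d1 (b - x0)).
    exists (u - x0). split; [lra|]. exists (A x0 * B x0). intros x Hx.
    destruct (Pt_between T a b x0 u x HT Ha Hx0T Hu ltac:(lra) ltac:(lra) ltac:(lra) ltac:(lra)) as [P1 P2].
    destruct (Pt_spec T a b x HT Ha Hb Hab) as [PT _].
    pose proof (fjump_in T _ HT PT) as FT.
    unfold Kf, kf. apply H1.
    + split; auto; lra.
    + split; auto; lra.
    + rewrite Rabs_right; lra.
    + rewrite Rabs_right; lra.
Qed.

Lemma reg_left T a b A B x0 : time_scale T -> T a -> T b -> a < b ->
  cont_on T a b A -> cont_on T a b B -> a < x0 <= b ->
  forall eps, 0 < eps -> exists delta, 0 < delta /\ exists c,
    forall x, x0 - delta < x < x0 -> Rabs (Kf T a b A B x - c) <= eps.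
Proof.
  intros HT Ha Hb Hab HA HB Hx0 eps Heps.
  destruct (classic (exists eta, 0 < eta /\ forall u, T u -> x0 - eta < u < x0 -> False)) as [[eta [Heta Hno]]|Hn].
  - exists (Rmin eta (x0 - a)). split; [apply Rmin_glb_lt; lra|].
    pose proof (Rmin_l eta (x0 - a)); pose proof (Rmin_r eta (x0 - a)).
    exists (Kf T a b A B (x0 - Rmin eta (x0 - a))). intros x Hx.
    unfold Kf. rewrite (Pt_const T a b (x0 - Rmin eta (x0 - a)) x); auto; try lra.
    + rewrite Rminus_diag, Rabs_R0; lra.
    + intros u Hu Hu2. apply (Hno u Hu). lra.
  - assert (Hld : forall eta, 0 < eta -> exists u, T u /\ x0 - eta < u < x0).
    { intros eta Heta. apply NNPP; intro Hc. apply Hn. exists eta. split; auto.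
      intros u Hu Hu2. apply Hc. exists u; auto. }
    assert (Hx0T : T x0).
    { destruct HT as [_ Hcl]. apply Hcl. intros e He. destruct (Hld e He) as [u [Hu Hu2]].
      exists u. split; auto. rewrite Rabs_left; lra. }
    assert (Hin0 : in_ts T a b x0) by (split; auto; lra).
    destruct (AB_cont T a b A B x0 HA HB Hin0 eps Heps) as [d1 [Hd1 H1]].
    destruct (Hld (Rmin d1 (x0 - a))) as [u [Hu Hu2]]; [apply Rmin_glb_lt; lra|].
    pose proof (Rmin_l d1 (x0 - a)); pose proof (Rmin_r d1 (x0 - a)).
    exists (x0 - u). split; [lra|]. exists (A x0 * B x0). intros x Hx.
    destruct (Pt_between T a b u x0 x HT Ha Hu Hx0T ltac:(lra) ltac:(lra) ltac:(lra) ltac:(lra)) as [P1 P2].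
    destruct (Pt_spec T a b x HT Ha Hb Hab) as [PT _].
    pose proof (fjump_in T _ HT PT) as FT.
    unfold Kf, kf. apply H1.
    + split; auto; lra.
    + split; auto; lra.
    + rewrite Rabs_left1; lra.
    + rewrite Rabs_left1; lra.
Qed.
Lemma real_ind a b (Q : R -> Prop) : a <= b -> Q a ->
  (forall y, a <= y < b -> Q y -> exists delta, 0 < delta /\ forall z, y < z < y + delta -> Q z) ->
  (forall y, a < y <= b -> (forall z, a <= z < y -> Q z) -> Q y) -> Q b.
Proof.
  intros Hab Ha Hr Hl.
  assert (HT : time_scale (fun _ => True)).
  { split; [exists 0; auto|]. intros; auto. }
  refine (ts_ind (fun _ => True) a b Q HT I Hab Ha _ _ b I _).
  - intros tau _ Hr2 HQ _. destruct (Hr tau Hr2 HQ) as [d [Hd Hd2]]. exists d; split; auto.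
  - intros tau _ Hr2 Hb. apply Hl; auto.
  - lra.
Qed.

Lemma Kf_approx T a b A B : time_scale T -> T a -> T b -> a < b ->
  cont_on T a b A -> cont_on T a b B ->
  forall eps, 0 < eps -> exists s, ex_RInt s a b /\
    forall x, a <= x <= b -> Rabs (s x - Kf T a b A B x) <= eps.
Proof.
  intros HT Ha Hb Hab HA HB eps Heps.
  set (K := Kf T a b A B).
  apply (real_ind a b (fun y => exists s, ex_RInt s a y /\ forall x, a <= x <= y -> Rabs (s x - K x) <= eps)).
  - lra.
  - exists K. split; [apply ex_RInt_point|]. intros x Hx. replace x with a by lra.
    rewrite Rminus_diag, Rabs_R0; lra.
  - intros y Hy [s [Hs1 Hs2]].
    destruct (reg_right T a b A B y HT Ha Hb Hab HA HB Hy eps Heps) as [d [Hd [c Hc]]].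
    exists d. split; auto. intros z Hz.
    exists (fun x => if Rle_dec x y then s x else c). split.
    + apply ex_RInt_Chasles with y.
      * apply ex_RInt_ext with s; auto. intros x Hx.
        rewrite Rmax_right in Hx by lra. destruct (Rle_dec x y); auto; lra.
      * apply ex_RInt_ext with (fun _ => c); [|apply ex_RInt_const]. intros x Hx.
        rewrite Rmin_left in Hx by lra. destruct (Rle_dec x y); auto; lra.
    + intros x Hx. destruct (Rle_dec x y); [apply Hs2; lra|].
      rewrite <- Rabs_Ropp. replace (- (c - K x)) with (K x - c) by ring. apply Hc. lra.
  - intros y Hy Hbel.
    destruct (reg_left T a b A B y HT Ha Hb Hab HA HB Hy eps Heps) as [d [Hd [c Hc]]].
    set (y1 := Rmax a (y - d / 2)).
    assert (Hy1 : a <= y1 < y /\ y - d < y1).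
    { unfold y1. split; [split; [apply Rmax_l|apply Rmax_lub_lt; lra]|].
      eapply Rlt_le_trans; [|apply Rmax_r]. lra. }
    destruct (Hbel y1 ltac:(lra)) as [s [Hs1 Hs2]].
    exists (fun x => if Rle_dec x y1 then s x else if Rlt_dec x y then c else K y). split.
    + apply ex_RInt_Chasles with y1.
      * apply ex_RInt_ext with s; auto. intros x Hx.
        rewrite Rmax_right in Hx by lra. destruct (Rle_dec x y1); auto; lra.
      * apply ex_RInt_ext with (fun _ => c); [|apply ex_RInt_const]. intros x Hx.
        rewrite Rmin_left in Hx by lra. rewrite Rmax_right in Hx by lra.
        destruct (Rle_dec x y1); [lra|]. destruct (Rlt_dec x y); auto; lra.
    + intros x Hx. destruct (Rle_dec x y1); [apply Hs2; lra|].
      destruct (Rlt_dec x y).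
      * rewrite <- Rabs_Ropp. replace (- (c - K x)) with (K x - c) by ring. apply Hc. lra.
      * replace x with y by lra. rewrite Rminus_diag, Rabs_R0; lra.
Qed.

Lemma Kf_int T a b A B : time_scale T -> T a -> T b -> a < b ->
  cont_on T a b A -> cont_on T a b B -> ex_RInt (Kf T a b A B) a b.
Proof.
  intros HT Ha Hb Hab HA HB.
  set (K := Kf T a b A B).
  assert (Hs : forall n : nat, exists s, ex_RInt s a b /\
    forall x, a <= x <= b -> Rabs (s x - K x) <= / (INR n + 1)).
  { intro n. apply Kf_approx; auto. apply Rinv_0_lt_compat. pose proof (pos_INR n); lra. }
  set (sn := fun n => epsilon (inhabits (fun _ : R => 0)) (fun s => ex_RInt s a b /\
    forall x, a <= x <= b -> Rabs (s x - K x) <= / (INR n + 1))).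
  assert (Hsn : forall n, ex_RInt (sn n) a b /\ forall x, a <= x <= b -> Rabs (sn n x - K x) <= / (INR n + 1)).
  { intro n. unfold sn. apply epsilon_spec. apply Hs. }
  set (f := fun (n : nat) (x : R) => if Rle_dec a x then if Rle_dec x b then sn n x else K x else K x).
  assert (Hf : forall n, ex_RInt (f n) a b).
  { intro n. apply ex_RInt_ext with (sn n); [|apply Hsn]. intros x Hx.
    rewrite Rmin_left in Hx by lra. rewrite Rmax_right in Hx by lra.
    unfold f. destruct (Rle_dec a x); [|lra]. destruct (Rle_dec x b); auto; lra. }
  destruct (filterlim_RInt f a b eventually eventually_filter K (fun n => RInt (f n) a b)) as [If [_ HIf]].
  - intro n. apply RInt_correct. apply Hf.
  - intros P [eps Heps].
    destruct (nfloor_ex (/ eps)) as [N [HN1 HN2]]. { left; apply Rinv_0_lt_compat, cond_pos. }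
    exists N. intros n Hn. apply Heps. intro t. change (Rabs (f n t - K t) < eps).
    unfold f. destruct (Rle_dec a t); [destruct (Rle_dec t b)|].
    + eapply Rle_lt_trans; [apply (proj2 (Hsn n)); lra|].
      pose proof (cond_pos eps) as He.
      assert (INR N <= INR n) by (apply le_INR; auto).
      apply Rlt_le_trans with (/ (/ eps)); [|rewrite Rinv_inv; lra].
      apply Rinv_lt_contravar. apply Rmult_lt_0_compat; [apply Rinv_0_lt_compat; auto|pose proof (pos_INR n); lra].
      lra.
    + rewrite Rminus_diag, Rabs_R0. apply cond_pos.
    + rewrite Rminus_diag, Rabs_R0. apply cond_pos.
  - exists If. exact HIf.
Qed.
Lemma RInt_bnd g u v C : u <= v -> ex_RInt g u v -> (forall x, u < x < v -> Rabs (g x) <= C) ->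
  Rabs (RInt g u v) <= C * (v - u).
Proof.
  intros Huv Hg HC. eapply Rle_trans; [apply abs_RInt_le; auto|].
  assert (Hn : ex_RInt (fun t => Rabs (g t)) u v) by (apply (ex_RInt_norm g u v Hg)).
  eapply Rle_trans; [apply (RInt_le _ (fun _ => C)); auto; apply ex_RInt_const|].
  rewrite RInt_const. change (scal (v - u) C) with ((v - u) * C). lra.
Qed.

Lemma RInt_sub_const g s v k : ex_RInt g s v ->
  RInt (fun x => g x - k) s v = RInt g s v - k * (v - s).
Proof.
  intros Hg. transitivity (minus (RInt g s v) (RInt (fun _ => k) s v)).
  { apply (RInt_minus g (fun _ => k)); auto; apply ex_RInt_const. }
  rewrite RInt_const.
  change (RInt g s v - (v - s) * k = RInt g s v - k * (v - s)). ring.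
Qed.

Lemma Kf_int_all T a b A B : time_scale T -> T a -> T b -> a < b ->
  cont_on T a b A -> cont_on T a b B -> forall u v, ex_RInt (Kf T a b A B) u v.
Proof.
  intros HT Ha Hb Hab HA HB.
  set (K := Kf T a b A B).
  assert (Hab_int : ex_RInt K a b) by (apply Kf_int; auto).
  assert (Hlow : forall x, x <= a -> K x = K a).
  { intros x Hx. unfold K, Kf. rewrite (Pt_low T a b x), (Pt_low T a b a); auto; lra. }
  assert (Hhigh : forall x, b <= x -> K x = K b).
  { intros x Hx. unfold K, Kf. rewrite (Pt_high T a b x), (Pt_high T a b b); auto; lra. }
  assert (Hbig : forall m M, m <= a -> b <= M -> ex_RInt K m M).
  { intros m M Hm HM. apply ex_RInt_Chasles with a.
    - apply ex_RInt_ext with (fun _ => K a); [|apply ex_RInt_const].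
      intros x Hx. rewrite Rmax_right in Hx by lra. symmetry; apply Hlow; lra.
    - apply ex_RInt_Chasles with b; auto.
      apply ex_RInt_ext with (fun _ => K b); [|apply ex_RInt_const].
      intros x Hx. rewrite Rmin_left in Hx by lra. symmetry; apply Hhigh; lra. }
  assert (Hle : forall u v, u <= v -> ex_RInt K u v).
  { intros u v Huv.
    set (m := Rmin u a). set (M := Rmax v b).
    assert (m <= u /\ m <= a) by (unfold m; split; [apply Rmin_l|apply Rmin_r]).
    assert (v <= M /\ b <= M) by (unfold M; split; [apply Rmax_l|apply Rmax_r]).
    pose proof (Hbig m M ltac:(lra) ltac:(lra)).
    apply (ex_RInt_Chasles_1 K u v M); [lra|].
    apply (ex_RInt_Chasles_2 K m u M); [lra|auto]. }
  intros u v. destruct (Rle_dec u v); [apply Hle; auto|].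
  apply ex_RInt_swap. apply Hle. lra.
Qed.

Lemma Kf_bounded T a b A B : time_scale T -> T a -> T b -> a < b ->
  cont_on T a b A -> cont_on T a b B -> exists C, forall x, Rabs (Kf T a b A B x) <= C.
Proof.
  intros HT Ha Hb Hab HA HB.
  destruct (ex_RInt_ub _ a b (Kf_int T a b A B HT Ha Hb Hab HA HB)) as [M HM].
  exists M. intros x. rewrite Rmin_left, Rmax_right in HM by lra.
  destruct (Rle_dec x a).
  - unfold Kf. rewrite (Pt_low T a b x) by auto. rewrite <- (Pt_low T a b a) by (auto; lra).
    apply (HM a). lra.
  - destruct (Rle_dec b x).
    + unfold Kf. rewrite (Pt_high T a b x) by auto. rewrite <- (Pt_high T a b b) by lra.
      apply (HM b). lra.
    + apply HM. lra.
Qed.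
Lemma I_deriv T a b A B t : time_scale T -> T a -> T b -> a < b ->
  cont_on T a b A -> cont_on T a b B -> in_ts T a b t ->
  delta_deriv T (fun y => RInt (Kf T a b A B) a y) (kf T A B t) t.
Proof.
  intros HT Ha Hb Hab HA HB [Ht Ht2].
  set (K := Kf T a b A B). set (k := kf T A B t). set (sg := fjump T t).
  set (g := fun x => K x - k).
  assert (HK : forall u v, ex_RInt K u v) by (apply Kf_int_all; auto).
  assert (Hg : forall u v, ex_RInt g u v).
  { intros u v. apply (ex_RInt_minus K (fun _ => k)); auto. apply ex_RInt_const. }
  assert (Key : forall s, RInt K a sg - RInt K a s - k * (sg - s) = RInt g s sg).
  { intro s. unfold g. rewrite RInt_sub_const; auto.
    rewrite <- (RInt_Chasles K a s sg); auto. change (plus ?x ?y) with (x + y). ring. }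
  intros eps Heps. fold sg.
  pose proof (fjump_ge T t) as Hsg. fold sg in Hsg.
  destruct (Rle_lt_or_eq_dec t sg Hsg) as [Hlt|Heq].
  - assert (Hconst : forall x, t < x < sg -> K x = k).
    { intros x Hx. unfold K, Kf, k. f_equal.
      destruct (Rlt_dec x b).
      + destruct (Pt_mid T a b x HT Ha ltac:(lra)) as [P1 [P2 P3]].
        assert (t <= Pt T a b x) by (apply P3; auto; lra).
        destruct (Rle_lt_or_eq_dec _ _ H) as [H'|H']; auto.
        exfalso. apply (fjump_gap T t (Pt T a b x)); auto. fold sg; lra.
      + rewrite Pt_high by lra. destruct (Rlt_dec t b); [|lra].
        assert (sg <= b) by (apply fjump_le; auto). lra. }
    destruct (Kf_bounded T a b A B HT Ha Hb Hab HA HB) as [C HC].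
    set (C' := C + Rabs k).
    assert (HC0 : 0 <= C') by (unfold C'; pose proof (HC a); pose proof (Rabs_pos (Kf T a b A B a)); pose proof (Rabs_pos k); lra).
    exists (Rmin (sg - t) (eps * (sg - t) / (C' + 1))).
    assert (Hd2 : 0 < eps * (sg - t) / (C' + 1)) by (apply Rdiv_lt_0_compat; [apply Rmult_lt_0_compat|]; lra).
    split; [apply Rmin_glb_lt; lra|].
    intros s Hs Hst. pose proof (Rmin_l (sg - t) (eps * (sg - t) / (C' + 1))).
    pose proof (Rmin_r (sg - t) (eps * (sg - t) / (C' + 1))).
    assert (Hs_le : s <= t).
    { destruct (Rle_lt_dec s t); auto. assert (sg <= s) by (apply fjump_le; auto).
      rewrite Rabs_left in Hst; lra. }
    rewrite Rabs_right in Hst by lra.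
    rewrite Key. rewrite <- (RInt_Chasles g s t sg); auto. change (plus ?x ?y) with (x + y).
    assert (B1 : Rabs (RInt g t sg) <= 0 * (sg - t)).
    { apply RInt_bnd; [lra|auto|]. intros x Hx. unfold g. rewrite Hconst by auto.
      rewrite Rminus_diag, Rabs_R0. lra. }
    assert (B2 : Rabs (RInt g s t) <= C' * (t - s)).
    { apply RInt_bnd; [lra|auto|]. intros x Hx. unfold g.
      eapply Rle_trans; [apply Rabs_triang|]. rewrite Rabs_Ropp. unfold C'. specialize (HC x). fold K in HC. lra. }
    eapply Rle_trans; [apply Rabs_triang|].
    rewrite (Rabs_right (sg - s)) by lra.
    assert (C' * (t - s) <= eps * (sg - t)).
    { apply Rle_trans with ((C' + 1) * (t - s)). nra.
      apply Rle_trans with ((C' + 1) * (eps * (sg - t) / (C' + 1))).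
      apply Rmult_le_compat_l; lra. right; field; lra. }
    nra.
  -
    assert (Hk : k = A t * B t) by (unfold k, kf; fold sg; rewrite <- Heq; auto).
    destruct (AB_cont T a b A B t HA HB (conj Ht Ht2) eps Heps) as [d1 [Hd1 H1]].
    assert (Hclose : forall p, in_ts T a b p -> in_ts T a b (fjump T p) ->
       Rabs (p - t) < d1 -> Rabs (fjump T p - t) < d1 -> Rabs (kf T A B p - k) <= eps).
    { intros p Hp Hq Hp2 Hq2. rewrite Hk. unfold kf. apply H1; auto. }
    destruct (Rlt_dec t b) as [Htb|Htb].
    + exists (Rmin d1 (b - t)). split; [apply Rmin_glb_lt; lra|].
      intros s Hs Hst. pose proof (Rmin_l d1 (b - t)); pose proof (Rmin_r d1 (b - t)).
      rewrite Key. rewrite <- Heq.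
      destruct (Rle_dec s t).
      * rewrite Rabs_right in Hst by lra. rewrite (Rabs_right (t - s)) by lra.
        replace (eps * (t - s)) with (eps * (t - s)) by ring.
        apply RInt_bnd; [lra|auto|]. intros x Hx. unfold g, K, Kf.
        set (p := Pt T a b x).
        assert (Hp : in_ts T a b p /\ s <= p <= t /\ s <= fjump T p <= t).
        { destruct (Rle_dec x a).
          - unfold p. rewrite Pt_low by auto. split; [split; auto; lra|]. split; [lra|].
            destruct (Rle_lt_or_eq_dec a t (proj1 Ht2)) as [Hat|Hat].
            + split; [pose proof (fjump_ge T a); lra|]. apply fjump_le; auto.
            + rewrite Hat. fold sg. lra.
          - destruct (Pt_mid T a b x HT Ha ltac:(lra)) as [P1 [P2 P3]]. fold p in P1, P2, P3.
            assert (s <= p).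
            { destruct (Rle_dec a s); [apply P3; auto; lra|lra]. }
            split; [split; auto; lra|]. split; [lra|].
            split; [pose proof (fjump_ge T p); lra|]. apply fjump_le; auto; lra. }
        destruct Hp as [Hp1 [Hp2 Hp3]].
        apply Hclose; auto.
        -- split; [apply fjump_in; auto; apply Hp1|]. pose proof (fjump_ge T p). destruct Hp1 as [_ Hp1]. lra.
        -- rewrite Rabs_left1; lra.
        -- rewrite Rabs_left1; lra.
      * rewrite Rabs_left in Hst by lra. rewrite (Rabs_left (t - s)) by lra.
        rewrite <- (opp_RInt_swap g t s) by auto. change (opp ?x) with (- x). rewrite Rabs_Ropp.
        replace (eps * - (t - s)) with (eps * (s - t)) by ring.
        apply RInt_bnd; [lra|auto|]. intros x Hx. unfold g, K, Kf.
        destruct (Pt_mid T a b x HT Ha ltac:(lra)) as [P1 [P2 P3]].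
        set (p := Pt T a b x) in *.
        assert (t <= p) by (apply P3; auto; lra).
        assert (fjump T p <= s) by (apply fjump_le; auto; lra).
        pose proof (fjump_ge T p).
        apply Hclose.
        -- split; auto; lra.
        -- split; [apply fjump_in; auto|lra].
        -- rewrite Rabs_right; lra.
        -- rewrite Rabs_right; lra.
    + assert (Htb' : t = b) by lra.
      exists d1. split; auto. intros s Hs Hst. rewrite Key. rewrite <- Heq.
      destruct (Rle_dec s t).
      * rewrite Rabs_right in Hst by lra. rewrite (Rabs_right (t - s)) by lra.
        apply RInt_bnd; [lra|auto|]. intros x Hx. unfold g, K, Kf.
        set (p := Pt T a b x).
        assert (Hp : in_ts T a b p /\ s <= p <= t /\ s <= fjump T p <= t).
        { destruct (Rle_dec x a).
          - unfold p. rewrite Pt_low by auto. split; [split; auto; lra|]. split; [lra|].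
            destruct (Rle_lt_or_eq_dec a t (proj1 Ht2)) as [Hat|Hat].
            + split; [pose proof (fjump_ge T a); lra|]. apply fjump_le; auto.
            + rewrite Hat. fold sg. lra.
          - destruct (Pt_mid T a b x HT Ha ltac:(lra)) as [P1 [P2 P3]]. fold p in P1, P2, P3.
            assert (s <= p).
            { destruct (Rle_dec a s); [apply P3; auto; lra|lra]. }
            split; [split; auto; lra|]. split; [lra|].
            split; [pose proof (fjump_ge T p); lra|]. apply fjump_le; auto; lra. }
        destruct Hp as [Hp1 [Hp2 Hp3]].
        apply Hclose; auto.
        -- split; [apply fjump_in; auto; apply Hp1|]. pose proof (fjump_ge T p). destruct Hp1 as [_ Hp1]. lra.
        -- rewrite Rabs_left1; lra.
        -- rewrite Rabs_left1; lra.
      * rewrite Rabs_left in Hst by lra. rewrite (Rabs_left (t - s)) by lra.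
        rewrite <- (opp_RInt_swap g t s) by auto. change (opp ?x) with (- x). rewrite Rabs_Ropp.
        replace (eps * - (t - s)) with (eps * (s - t)) by ring.
        apply RInt_bnd; [lra|auto|]. intros x Hx. unfold g, K, Kf.
        rewrite Pt_high by lra. rewrite <- Htb'. fold k. rewrite Rminus_diag, Rabs_R0. lra.
Qed.
Lemma ctsT_cont_on T a b h : (forall t, in_ts T a b t -> ctsT T h t) -> cont_on T a b h.
Proof.
  intros H t Ht eps Heps. destruct (H t Ht eps Heps) as [d [Hd Hd2]]. exists d; split; auto.
  intros s [Hs _] Hst. apply Hd2; auto.
Qed.

Lemma cont_on_inv T a b E : cont_on T a b E -> (forall t, in_ts T a b t -> E t <> 0) ->
  cont_on T a b (fun y => / E y).
Proof.
  intros HE Hn t Ht eps Heps.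
  pose proof (Rabs_pos_lt _ (Hn t Ht)) as Hp.
  set (m := Rabs (E t)).
  destruct (HE t Ht (Rmin (m / 2) (eps * m * m / 2))) as [d [Hd Hd2]].
  { apply Rmin_glb_lt; [unfold m; lra|]. unfold m. apply Rdiv_lt_0_compat; [|lra].
    repeat apply Rmult_lt_0_compat; lra. }
  exists d. split; auto. intros s Hs Hst. specialize (Hd2 s Hs Hst).
  pose proof (Rmin_l (m / 2) (eps * m * m / 2)); pose proof (Rmin_r (m / 2) (eps * m * m / 2)).
  assert (Hms : m / 2 <= Rabs (E s)).
  { pose proof (Rabs_triang_inv (E t) (E s)). rewrite <- Rabs_Ropp in Hd2.
    replace (- (E s - E t)) with (E t - E s) in Hd2 by ring. unfold m in *. lra. }
  assert (Hns : E s <> 0) by (intro Z; rewrite Z, Rabs_R0 in Hms; unfold m in *; lra).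
  replace (/ E s - / E t) with ((E t - E s) * / (E s * E t)) by (field; auto).
  rewrite Rabs_mult, Rabs_inv, Rabs_mult. fold m.
  apply Rle_lt_trans with (Rabs (E t - E s) * / (m / 2 * m)).
  - apply Rmult_le_compat_l; [apply Rabs_pos|]. apply Rinv_le_contravar.
    + unfold m; apply Rmult_lt_0_compat; lra.
    + apply Rmult_le_compat_r; unfold m in *; lra.
  - rewrite <- Rabs_Ropp. replace (- (E t - E s)) with (E s - E t) by ring.
    apply Rlt_le_trans with ((eps * m * m / 2) * / (m / 2 * m)).
    + apply Rmult_lt_compat_r; [apply Rinv_0_lt_compat; unfold m; apply Rmult_lt_0_compat; lra|lra].
    + right. unfold m. field. lra.
Qed.

Lemma cont_on_mul T a b f g : cont_on T a b f -> cont_on T a b g -> cont_on T a b (fun y => f y * g y).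
Proof.
  intros Hf Hg t Ht eps Heps.
  destruct (AB_cont T a b f g t Hf Hg Ht (eps / 2)) as [d [Hd Hd2]]; [lra|].
  exists d. split; auto. intros s Hs Hst. eapply Rle_lt_trans; [apply Hd2; auto|lra].
Qed.

Lemma cont_on_add T a b f g : cont_on T a b f -> cont_on T a b g -> cont_on T a b (fun y => f y + g y).
Proof.
  intros Hf Hg t Ht eps Heps.
  destruct (Hf t Ht (eps/2)) as [d1 [Hd1 H1]]; [lra|].
  destruct (Hg t Ht (eps/2)) as [d2 [Hd2 H2]]; [lra|].
  exists (Rmin d1 d2). split; [apply Rmin_glb_lt; auto|]. intros s Hs Hst.
  pose proof (Rmin_l d1 d2); pose proof (Rmin_r d1 d2).
  specialize (H1 s Hs ltac:(lra)). specialize (H2 s Hs ltac:(lra)).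
  replace (f s + g s - (f t + g t)) with ((f s - f t) + (g s - g t)) by ring.
  eapply Rle_lt_trans; [apply Rabs_triang|]. lra.
Qed.

Lemma cont_rd T a b h : cont_on T a b h -> rd_cont T a b h.
Proof.
  intros H t Ht. split.
  - intros _. apply H; auto.
  - intros _. exists (h t). intros eps Heps. destruct (H t Ht eps Heps) as [d [Hd Hd2]].
    exists d. split; auto. intros s Hs Hst. apply Hd2; auto.
    rewrite Rabs_left; lra.
Qed.

Lemma dd_scal T f fd c t : delta_deriv T f fd t -> delta_deriv T (fun u => c * f u) (c * fd) t.
Proof.
  intros H. apply (dd_val T _ (c * fd + 0 * 0)); [ring|].
  apply (dd_ext T (fun u => c * f u + 0 * (fun _ => 0) u)); [intro; simpl; ring|].
  apply dd_lin; auto. apply dd_const.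
Qed.
Theorem mainTheorem2 (T : R -> Prop) (a b : R) (d f : R -> R) (e : R -> R -> R) :
  time_scale T -> T a -> T b -> a < b ->
  cont_on T a b d -> cont_on T a b f ->
  (forall t, in_ts T a b t -> 1 + mu T t * d t <> 0) ->
  is_exp T a b d e ->
  (exists F, delta_antideriv T a b (fun s => Rabs (e a (fjump T s))) F /\
     exists M, forall t, in_ts T a b t -> Rabs (e t a) * (F t - F a) <= M) ->
  exists L, 0 < L /\
    forall eps, 0 < eps ->
    forall g gd, C1rd T a b g gd ->
      (forall t, in_ts T a b t -> Rabs (gd t - d t * g t - f t) <= eps) ->
      exists w wd, C1rd T a b w wd /\
        (forall t, in_ts T a b t -> wd t - d t * w t - f t = 0) /\
        (forall t, in_ts T a b t -> Rabs (g t - w t) <= L * eps).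
Proof.
  intros HT Ha Hb Hab Hd Hf Hreg He [F [HF [M HM]]].
  assert (Hia : in_ts T a b a) by (split; auto; lra).
  set (E := fun u => e u a).
  assert (HE : forall u, in_ts T a b u -> delta_deriv T E (d u * E u) u) by (intros u Hu; apply (He a Hia); auto).
  assert (HEa : E a = 1) by (apply (He a Hia)).
  assert (HEnz : forall u, in_ts T a b u -> E u <> 0).
  { apply (nonvanish T a b d E HT Ha Hb ltac:(lra) Hd Hreg HE). rewrite HEa; lra. }
  assert (Hinv : forall r, in_ts T a b r -> e a r * E r = 1) by (apply (exp_inv T a b d e HT Ha Hb ltac:(lra) Hd Hreg He)).
  assert (HEsig : forall u, in_ts T a b u -> E (fjump T u) <> 0).
  { intros u Hu. pose proof (dd_step T E _ u (proj1 Hu) (HE u Hu)) as S.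
    replace (E (fjump T u)) with ((1 + mu T u * d u) * E u) by (unfold mu; rewrite <- Rplus_0_r; lra).
    apply Rmult_integral_contrapositive; split; auto. }
  assert (HEc : cont_on T a b E).
  { apply ctsT_cont_on. intros t Ht. apply (dd_cont T E (d t * E t)); [apply Ht|auto]. }
  set (B := fun y => / E y).
  assert (HBc : cont_on T a b B) by (apply cont_on_inv; auto).
  set (I := fun y => RInt (Kf T a b f B) a y).
  assert (HI : forall t, in_ts T a b t -> delta_deriv T I (f t * / E (fjump T t)) t).
  { intros t Ht. apply (I_deriv T a b f B t); auto. }
  assert (HIa : I a = 0) by (unfold I; rewrite RInt_point; reflexivity).
  exists (Rmax M 1). split; [eapply Rlt_le_trans; [|apply Rmax_r]; lra|].
  intros eps Heps g gd [Hg Hgrd] Hh.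
  set (w := fun u => E u * (g a + I u)).
  set (wd := fun u => d u * w u + f u).
  assert (Hw : forall t, in_ts T a b t -> delta_deriv T w (wd t) t).
  { intros t Ht.
    assert (H1 : delta_deriv T (fun u => g a + I u) (f t * / E (fjump T t)) t).
    { apply (dd_val T _ (1 * 0 + 1 * (f t * / E (fjump T t)))); [ring|].
      apply (dd_ext T (fun u => 1 * (fun _ => g a) u + 1 * I u)); [intro; simpl; ring|].
      apply dd_lin; [apply dd_const|auto]. }
    pose proof (dd_prod T E (fun u => g a + I u) _ _ t (proj1 Ht) (HE t Ht) H1) as H2.
    apply (dd_val T _ _ _ _ (f_equal (fun x => x) (eq_refl _))) in H2.
    eapply dd_val; [|exact H2]. unfold wd, w. field. apply HEsig; auto. }
  exists w, wd. split; [split|split].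
  - exact Hw.
  - apply cont_rd. unfold wd. apply cont_on_add; auto. apply cont_on_mul; auto.
    apply ctsT_cont_on. intros t Ht. apply (dd_cont T w (wd t)); [apply Ht|auto].
  - intros t Ht. unfold wd. ring.
  -
    set (z := fun u => g u - w u).
    assert (Hz : forall t, in_ts T a b t -> delta_deriv T z (gd t - wd t) t).
    { intros t Ht. apply (dd_val T _ (1 * gd t + (-1) * wd t)); [ring|].
      apply (dd_ext T (fun u => 1 * g u + (-1) * w u)); [intro; unfold z; ring|].
      apply dd_lin; auto. }
    set (Phi := fun u => / E u * z u).
    set (h := fun u => gd u - d u * g u - f u).
    assert (HPhi : forall t, in_ts T a b t -> delta_deriv T Phi (h t * / E (fjump T t)) t).
    { intros t Ht.
      pose proof (dd_inv T E _ t (proj1 Ht) (HE t Ht) (HEnz t Ht) (HEsig t Ht)) as H1.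
      pose proof (dd_prod T (fun u => / E u) z _ _ t (proj1 Ht) H1 (Hz t Ht)) as H2.
      eapply dd_val; [|exact H2]. unfold h, z, wd. field. split; [apply HEsig|apply HEnz]; auto. }
    assert (HPhia : Phi a = 0).
    { unfold Phi, z, w. rewrite HEa, HIa. field. }
    assert (Hzt : forall t, in_ts T a b t -> z t = E t * Phi t).
    { intros t Ht. unfold Phi. field. apply HEnz; auto. }
    assert (Hcmp : forall t, in_ts T a b t -> (t < b \/ ~ left_dense T t) ->
              Rabs (Phi t - Phi a) <= eps * F t - eps * F a).
    { intros t Ht Hcase.
      apply (compare T a t Phi (fun u => eps * F u) (fun s => h s * / E (fjump T s))
               (fun s => eps * Rabs (e a (fjump T s)))); auto; try apply Ht.
      - intros s Hs Hs2. assert (Hin : in_ts T a b s) by (split; auto; destruct Ht as [_ Ht]; lra).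
        split; [apply HPhi; auto|]. split.
        + apply dd_scal. apply HF; auto. destruct Ht as [_ Ht]; lra.
        + assert (Hsig : in_ts T a b (fjump T s)).
          { split; [apply fjump_in; auto|]. pose proof (fjump_ge T s).
            assert (fjump T s <= t) by (apply fjump_le; [apply Ht|lra]).
            destruct Ht as [_ Ht]; lra. }
          specialize (Hinv _ Hsig).
          assert (Hea : e a (fjump T s) = / E (fjump T s)).
          { apply (Rmult_eq_reg_r (E (fjump T s))); [|apply HEsig; auto].
            rewrite Hinv. field. apply HEsig; auto. }
          rewrite Hea, Rabs_mult. apply Rmult_le_compat_r; [apply Rabs_pos|]. apply Hh; auto.
      - intros Hld. destruct Hcase as [Htb|Hn]; [|contradiction].
        split.
        + apply (dd_cont T Phi (h t * / E (fjump T t))); [apply Ht|]. apply HPhi; auto.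
        + apply (dd_cont T _ (eps * Rabs (e a (fjump T t)))); [apply Ht|]. apply dd_scal. apply HF; [apply Ht|].
          split; [apply Ht|auto]. }
    assert (Hbnd : forall t, in_ts T a b t -> (t < b \/ ~ left_dense T t) -> Rabs (z t) <= eps * M).
    { intros t Ht Hcase. specialize (Hcmp t Ht Hcase). rewrite HPhia, Rminus_0_r in Hcmp.
      rewrite Hzt, Rabs_mult by auto.
      specialize (HM t Ht). change (Rabs (E t) * (F t - F a) <= M) in HM.
      apply Rle_trans with (Rabs (E t) * (eps * (F t - F a))).
      apply Rmult_le_compat_l; [apply Rabs_pos|lra].
      replace (Rabs (E t) * (eps * (F t - F a))) with (eps * (Rabs (E t) * (F t - F a))) by ring.
      apply Rmult_le_compat_l; lra. }
    assert (HzM : forall t, in_ts T a b t -> Rabs (z t) <= eps * M).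
    { intros t Ht. destruct (Rlt_dec t b) as [Hlt|Hge]; [apply Hbnd; auto|].
      assert (Htb : t = b) by (destruct Ht as [_ Ht]; lra). subst t.
      destruct (classic (left_dense T b)) as [Hld|Hnld]; [|apply Hbnd; auto].
      apply le_eps_lemma. intros ep Hep.
      destruct (dd_cont T z _ b Hb (Hz b Ht) ep Hep) as [dl [Hdl Hdl2]].
      destruct (Hld (Rmin dl (b - a))) as [s [Hs Hs2]]; [apply Rmin_glb_lt; lra|].
      pose proof (Rmin_l dl (b - a)); pose proof (Rmin_r dl (b - a)).
      assert (Hsin : in_ts T a b s) by (split; auto; lra).
      specialize (Hbnd s Hsin (or_introl (proj2 Hs2))).
      specialize (Hdl2 s Hs). rewrite Rabs_left in Hdl2 by lra. specialize (Hdl2 ltac:(lra)).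
      pose proof (Rabs_triang_inv (z b) (z s)). rewrite <- Rabs_Ropp in Hdl2.
      replace (- (z s - z b)) with (z b - z s) in Hdl2 by ring. lra. }
    intros t Ht. specialize (HzM t Ht). fold (z t).
    apply Rle_trans with (eps * M); auto.
    rewrite (Rmult_comm (Rmax M 1) eps). apply Rmult_le_compat_l; [lra|apply Rmax_l].
Qed.
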